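(* Let $(X,\rho)$ be a metric space, $f:X\to X$ continuous, $x\in X$, $\ell\in\mathbb N$, $n\ge2$ an integer and $\varepsilon>0$. Define $\Delta_\ell$ by \[ C_\ell(x,n,\varepsilon)=\frac1{n^2}\Big[\sum_{l\ge\ell}(l-\ell+1)N_l(x,n,\varepsilon)+n+\Delta_\ell\Big]. \] Then $0\le\Delta_\ell\le2(\ell-1)(n-1)$.
   Context: Bowen metric: $\rho_\ell(y,z)=\max_{0\le i<\ell}\rho(f^iy,f^iz)$. Correlation sum: $C_\ell(x,n,\varepsilon)=n^{-2}\#\{(i,j):0\le i,j<n,\ \rho_\ell(f^ix,f^jx)\le\varepsilon\}$. Recurrence plot $R(x,n,\varepsilon)$: the $n\times n$ matrix indexed by $0\le i,j<n$ with entry $1$ if $\rho(f^ix,f^jx)\le\varepsilon$ and $0$ otherwise. A line of length $\ell$ in it is a triple $(i,j,\ell)$ of integers with $0\le i,j\le n-\ell$, $i\ne j$, entries $(i+k,j+k)$ equal to $1$ for all $0\le k<\ell$, entry $(i-1,j-1)$ equal to $0$ if $\min\{i,j\}>0$, and entry $(i+\ell,j+\ell)$ equal to $0$ if $\max\{i,j\}<n-\ell$. $N_l(x,n,\varepsilon)$ is the number of lines of length exactly $l$ (including lines with $\min\{i,j\}=0$ or $\max\{i,j\}=n-l$). *)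

(* Defs.v *)
From HB Require Import structures.
From mathcomp Require Import all_boot all_order all_algebra.
From mathcomp Require Import all_classical all_reals all_analysis.
Set Implicit Arguments. Unset Strict Implicit. Unset Printing Implicit Defensive.
Import Order.TTheory GRing.Theory Num.Theory.
Local Open Scope ring_scope.

Section RQA.
Context {R : realType} {X : metricType R} (f : X -> X).

(* Bowen metric rho_l(y,z) = max_{0 <= i < l} rho(f^i y, f^i z)
   (distances are >= 0, so 0 is a neutral element for the max). *)
Definition bowen (l : nat) (y z : X) : R :=
  \big[Num.max/0]_(k < l) mdist (iter k f y) (iter k f z).

Definition corr_sum (l : nat) (x : X) (n : nat) (eps : R) : R :=
  (n%:R ^+ 2)^-1 *
  #|[set p : 'I_n * 'I_n | bowen l (iter p.1 f x) (iter p.2 f x) <= eps]|%:R.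

Definition rp_entry (x : X) (eps : R) (i j : nat) : bool :=
  mdist (iter i f x) (iter j f x) <= eps.

Definition is_line (x : X) (n : nat) (eps : R) (i j l : nat) : bool :=
  [&& (i + l <= n)%N, (j + l <= n)%N, i != j,
      [forall k : 'I_l, rp_entry x eps (i + k) (j + k)],
      (0 < minn i j)%N ==> ~~ rp_entry x eps i.-1 j.-1
    & (maxn i j < n - l)%N ==> ~~ rp_entry x eps (i + l) (j + l)].

(* N_l(x,n,eps): number of lines of length exactly l
   (indices satisfy 0 <= i,j <= n - l <= n). *)
Definition nlines (x : X) (n : nat) (eps : R) (l : nat) : nat :=
  #|[set p : 'I_n.+1 * 'I_n.+1 | is_line x n eps p.1 p.2 l]|.

End RQA.

(* Main.v *)
Require Import Defs.
From HB Require Import structures.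
From mathcomp Require Import all_boot all_order all_algebra.
From mathcomp Require Import all_classical all_reals all_analysis.
From mathcomp Require Import zify ring.
Import Order.TTheory GRing.Theory Num.Theory.

Set Implicit Arguments. Unset Strict Implicit. Unset Printing Implicit Defensive.
Module RQAComb.
Section CombS.
Variable e : nat -> nat -> bool.

Definition allw m i j := [forall k : 'I_m, e (i + k) (j + k)].

Lemma allwP m i j : reflect (forall k, k < m -> e (i+k) (j+k)) (allw m i j).
Proof.
apply: (iffP forallP) => H k; first by move=> hk; exact: (H (Ordinal hk)).
exact: H k (ltn_ord k).
Qed.

Lemma allwS m i j : allw m.+1 i j = e i j && allw m i.+1 j.+1.
Proof.
apply/allwP/andP.
  move=> H; split; first by have := H 0 (ltn0Sn _); rewrite !addn0.
  apply/allwP => k hk; have := H k.+1 hk; by rewrite !addnS !addSn.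
move=> [h1 /allwP h2] [|k] hk; first by rewrite !addn0.
rewrite !addnS -!addSn; exact: h2.
Qed.

Lemma allwSr m i j : allw m.+1 i j = allw m i j && e (i+m) (j+m).
Proof.
apply/allwP/andP.
  move=> H; split; last by apply: H.
  apply/allwP => k hk; apply: H; exact: ltnW.
move=> [/allwP h1 h2] k; rewrite ltnS leq_eqVlt => /orP [/eqP -> //|]; exact: h1.
Qed.

Variable n : nat.

Definition win m i j := [&& i + m <= n, j + m <= n, i != j & allw m i j].
Definition lm m i j := win m i j && ((0 < minn i j) ==> ~~ e i.-1 j.-1).
Definition rc m i j := (maxn i j < n - m) ==> ~~ e (i+m) (j+m).

Definition dsum k (F : nat -> nat -> bool) :=
  \sum_(0 <= i < k) \sum_(0 <= j < k) (F i j : nat).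

Definition cW m := dsum n.+1 (win m).
Definition cR m := dsum n.+1 (lm m).
Definition cN m := dsum n.+1 (fun i j => lm m i j && rc m i j).

Lemma dsum_split k (F G H : nat -> nat -> bool) : (forall i j, (F i j : nat) = G i j + H i j) ->
  dsum k F = dsum k G + dsum k H.
Proof.
move=> E; rewrite /dsum -big_split; apply: eq_bigr => i _.
rewrite -big_split; apply: eq_bigr => j _; exact: E.
Qed.

Lemma ptA m i j : win m i.+1 j.+1 && ~~ lm m i.+1 j.+1 = win m.+1 i j.
Proof.
rewrite /lm /win allwS minnSS /= eqSS !addSn !addnS.
by case: (_ <= n); case: (_ <= n); case: (i != j); case: (e i j); case: allw.
Qed.

Lemma ptB m i j : lm m i j && ~~ rc m i j = lm m.+1 i j.
Proof.
rewrite /lm /win /rc allwSr negb_imply negbK.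
have -> : (maxn i j < n - m) = (i + m.+1 <= n) && (j + m.+1 <= n).
  by rewrite gtn_max !ltn_subRL !addnS (addnC m i) (addnC m j).
case h1: (i + m.+1 <= n); case h2: (j + m.+1 <= n); rewrite /= ?andbF //.
have -> : i + m <= n by lia.
have -> : j + m <= n by lia.
by case: (i != j); case: allw; case: (_ ==> _); case: e.
Qed.

Lemma cR_N m : cR m = cN m + cR m.+1.
Proof.
rewrite /cR /cN (@dsum_split _ _ (fun i j => lm m i j && rc m i j) (fun i j => lm m i j && ~~ rc m i j)).
  by rewrite /dsum; congr (_ + _); apply: eq_bigr => i _; apply: eq_bigr => j _; rewrite ptB.
by move=> i j; case: lm; case: rc.
Qed.

Lemma cW_R m : cW m = cR m + cW m.+1.
Proof.
rewrite /cW /cR (@dsum_split _ _ (lm m) (fun i j => win m i j && ~~ lm m i j)); last first.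
  by move=> i j; rewrite /lm; case: win; case: (_ ==> _).
congr (_ + _).
have -> : dsum n.+1 (fun i j => win m i j && ~~ lm m i j) =
   \sum_(0 <= i < n) \sum_(0 <= j < n) (win m.+1 i j : nat).
  rewrite /dsum big_nat_recl // big1 ?add0n; last first.
    by move=> j _; rewrite /lm min0n /= andbT; case: win.
  apply: eq_bigr => i _; rewrite big_nat_recl // /lm minn0 /= andbT andbN add0n.
  by apply: eq_bigr => j _; rewrite -ptA.
rewrite /dsum [RHS]big_nat_recr //=.
have -> : \sum_(0 <= j < n.+1) (win m.+1 n j : nat) = 0.
  by apply: big1 => j _; rewrite /win; have -> : (n + m.+1 <= n) = false by apply/negbTE/negP; lia.
rewrite addn0.
apply: eq_bigr => i _; rewrite big_nat_recr //=.
rewrite /win; have -> : (n + m.+1 <= n) = false by apply/negbTE/negP; lia.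
by rewrite /= andbF addn0.
Qed.


Definition cS l := \sum_(l <= m < n.+1) (m - l + 1) * cN m.
Definition cT l := \sum_(l <= m < n.+1) cN m.

Lemma down (P : nat -> Prop) : P n.+1 -> (forall l, l <= n -> P l.+1 -> P l) ->
  forall l, l <= n.+1 -> P l.
Proof.
move=> P0 PS l hl; have [k hk] : exists k, k + l = n.+1 by exists (n.+1 - l); lia.
elim: k l hl hk => [|k IH] l hl hk; first by rewrite add0n in hk; rewrite hk.
apply: PS; first lia. apply: IH; lia.
Qed.

Lemma cW0g m : n < m -> cW m = 0.
Proof.
move=> hm; apply: big1 => i _; apply: big1 => j _; rewrite /win.
by have -> : (i + m <= n) = false by apply/negbTE/negP; lia.
Qed.

Lemma cW0 : cW n.+1 = 0.
Proof.
exact: cW0g.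
Qed.

Lemma cR0 : cR n.+1 = 0.
Proof.
apply: big1 => i _; apply: big1 => j _; rewrite /lm /win.
by have -> : (i + n.+1 <= n) = false by apply/negbTE/negP; lia.
Qed.

Lemma cTS l : l <= n -> cT l = cN l + cT l.+1.
Proof. by move=> hl; rewrite /cT big_nat_recl // big_add1. Qed.

Lemma cSS l : l <= n -> cS l = cS l.+1 + cT l.
Proof.
move=> hl; rewrite /cS (cTS hl) /cT big_nat_recl // !big_add1 /= subnn add0n mul1n.
rewrite addnCA; congr (_ + _).
rewrite -big_split; apply: eq_big_nat => m hm /=.
have -> : m.+1 - l + 1 = (m.+1 - l.+1 + 1) + 1 by lia.
by rewrite mulnDl mul1n.
Qed.

Lemma cR_T l : l <= n.+1 -> cR l = cT l.
Proof.
revert l; apply: (@down (fun l => cR l = cT l)); first by rewrite cR0 /cT big_geq //.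
by move=> k hk IH; rewrite cR_N IH (cTS hk).
Qed.

Lemma cW_S l : l <= n.+1 -> cW l = cS l.
Proof.
revert l; apply: (@down (fun l => cW l = cS l)); first by rewrite cW0 /cS big_geq //.
move=> k hk IH; rewrite cW_R IH (cSS hk) cR_T 1?addnC //; lia.
Qed.


Lemma sum_eq_lt i k : \sum_(0 <= j < k) (i == j : nat) = (i < k).
Proof.
elim: k => [|k IH]; first by rewrite big_geq.
rewrite big_nat_recr // IH ltnS leq_eqVlt.
by case: (ltngtP i k) => h /=; rewrite ?addn0 ?addn1 // ?eqxx; lia.
Qed.

Lemma diag_sum k : \sum_(0 <= i < k) \sum_(0 <= j < k) (i == j : nat) = k.
Proof.
rewrite (@eq_big_nat _ _ _ 0 k _ (fun _ => 1)); last by move=> i hi; rewrite sum_eq_lt; case/andP: hi => _ ->.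
by rewrite sum_nat_const_nat subn0 muln1.
Qed.

Lemma sum_neq i k : i < k -> \sum_(0 <= j < k) (j != i : nat) = k.-1.
Proof.
move=> hi.
have : \sum_(0 <= j < k) (j != i : nat) + \sum_(0 <= j < k) (i == j : nat) = k.
  rewrite -big_split /= (@eq_big_nat _ _ _ 0 k _ (fun _ => 1)).
    by rewrite sum_nat_const_nat subn0 muln1.
  by move=> j _; rewrite eq_sym; case: (i == j).
rewrite sum_eq_lt hi; lia.
Qed.

Lemma sum_lt c k : \sum_(0 <= i < k) (i < c : nat) = minn k c.
Proof.
elim: k => [|k IH]; first by rewrite big_geq // min0n.
rewrite big_nat_recr // IH; case: (ltnP k c) => h /=; lia.
Qed.

Lemma sum_big l k : \sum_(0 <= i < k) (k < i + l : nat) <= l.-1.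
Proof.
rewrite big_nat_rev /= (@eq_big_nat _ _ _ 0 k _ (fun i => (i < l.-1 : nat))).
  by rewrite sum_lt geq_minr.
move=> i hi; congr nat_of_bool; apply/idP/idP; lia.
Qed.

Variable l : nat.
Definition Dt i j := [&& i != j, ~~((i + l <= n) && (j + l <= n)) & allw l i j].

Lemma Dt_bound : dsum n Dt <= 2 * (l.-1 * n.-1).
Proof.
rewrite /dsum.
apply: (@leq_trans (\sum_(0 <= i < n) \sum_(0 <= j < n) ((n < i + l) * (j != i) + (n < j + l) * (i != j)))).
  apply: leq_sum => i _; apply: leq_sum => j _.
  rewrite /Dt !ltnNge (eq_sym j i); by case: (i + l <= n); case: (j + l <= n); case: (i != j); case: allw.
under eq_bigr => i _ do rewrite big_split /=.
rewrite big_split /= mul2n -addnn.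
have H : forall F : nat -> nat -> bool,
   (forall i j, F i j = (j != i)) ->
   \sum_(0 <= i < n) \sum_(0 <= j < n) (n < i + l) * F i j <= l.-1 * n.-1.
  move=> F hF.
  rewrite (@eq_big_nat _ _ _ 0 n _ (fun i => (n < i + l) * n.-1)).
    by rewrite -big_distrl /= leq_mul2r sum_big orbT.
  move=> i /andP [_ hi]; rewrite -big_distrr /=; congr (_ * _).
  rewrite (eq_bigr (fun j => (j != i : nat))) ?sum_neq // => j _; by rewrite hF.
apply: leq_add; first exact: (H (fun i j => j != i)).
by rewrite exchange_big_nat; apply: (H (fun i j => j != i)).
Qed.


Lemma cW_n : 0 < l -> cW l = dsum n (win l).
Proof.
move=> hl; rewrite /cW /dsum big_nat_recr //=.
have -> : \sum_(0 <= j < n.+1) (win l n j : nat) = 0.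
  by apply: big1 => j _; rewrite /win; have -> : (n + l <= n) = false by apply/negbTE/negP; lia.
rewrite addn0; apply: eq_bigr => i _; rewrite big_nat_recr //=.
rewrite /win; have -> : (n + l <= n) = false by apply/negbTE/negP; lia.
by rewrite /= andbF addn0.
Qed.

Lemma split_allw : 0 < l -> (forall i, allw l i i) ->
  dsum n (allw l) = n + cW l + dsum n Dt.
Proof.
move=> hl hd.
have E : forall i j, (allw l i j : nat) = (i == j) + (win l i j + Dt i j).
  move=> i j; case: (eqVneq i j) => [<-|ne]; first by rewrite /win /Dt eqxx hd /= ?andbF.
  rewrite /win /Dt ne /=; by case: (i + l <= n); case: (j + l <= n); case: allw.
rewrite (cW_n hl) /dsum -addnA.
transitivity (\sum_(0 <= i < n) \sum_(0 <= j < n) (i == j : nat) +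
  (\sum_(0 <= i < n) \sum_(0 <= j < n) (win l i j : nat) +
   \sum_(0 <= i < n) \sum_(0 <= j < n) (Dt i j : nat))); last by rewrite diag_sum.
rewrite -!big_split /=; apply: eq_bigr => i _.
rewrite -!big_split /=; apply: eq_bigr => j _; exact: E.
Qed.


Lemma card_dsum k (P : nat -> nat -> bool) :
  #|[set p : 'I_k * 'I_k | P p.1 p.2]| = dsum k P.
Proof.
rewrite /dsum big_mkord; under eq_bigr do rewrite big_mkord.
rewrite pair_big /= -sum1_card big_mkcond /=.
by apply: eq_bigr => p _; rewrite inE; case: (P _ _).
Qed.

End CombS.
End RQAComb.
Import RQAComb.


Local Open Scope ring_scope.

Theorem mainTheorem6 (R : realType) (X : metricType R) (f : X -> X)
  (hf : continuous f) (x : X) (l : nat) (hl : (1 <= l)%N)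
  (n : nat) (hn : (2 <= n)%N) (eps : R) (heps : 0 < eps) :
  let Delta : R :=
    n%:R ^+ 2 * corr_sum f l x n eps
    - (\sum_(l <= m < n.+1) (m - l + 1)%:R * (nlines f x n eps m)%:R)
    - n%:R in
  0 <= Delta <= 2 * (l.-1)%:R * (n.-1)%:R.
Proof.
cbv zeta.
pose e := rp_entry f x eps.
have hd : forall i, allw e l i i.
  move=> i; apply/allwP => k _; rewrite /e /rp_entry mdistxx; exact: ltW.
have bow : forall i j : nat, (bowen f l (iter i f x) (iter j f x) <= eps) = allw e l i j.
  move=> i j; rewrite /bowen; apply/bigmax_leP/allwP.
    move=> [_ H] k hk; have := H (Ordinal hk) isT; by rewrite /e /rp_entry -!iterD !(addnC k).
  move=> H; split; first exact: ltW.
  move=> k _; have := H k (ltn_ord k); by rewrite /e /rp_entry -!iterD !(addnC k).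
have hA : #|[set p : 'I_n * 'I_n | bowen f l (iter p.1 f x) (iter p.2 f x) <= eps]| =
          dsum n (allw e l).
  rewrite (card_dsum n (fun i j => bowen f l (iter i f x) (iter j f x) <= eps)).
  rewrite /dsum; apply: eq_bigr => i _; apply: eq_bigr => j _; by rewrite bow.
have hN : forall m, nlines f x n eps m = cN e n m.
  move=> m; rewrite /nlines (card_dsum n.+1 (fun i j => is_line f x n eps i j m)).
  rewrite /cN /dsum; apply: eq_bigr => i _; apply: eq_bigr => j _.
  by rewrite /is_line /lm /win /rc /allw /e !andbA.
have hS : \sum_(l <= m < n.+1) (m - l + 1)%:R * (nlines f x n eps m)%:R = (cS e n l)%:R :> R.
  rewrite /cS natr_sum; apply: eq_bigr => m _; by rewrite natrM hN.
have hW : cS e n l = cW e n l.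
  case: (leqP l n.+1) => h; first by rewrite cW_S.
  rewrite cW0g /cS ?big_geq //; lia.
have hsplit := @split_allw e n l hl hd.
rewrite /corr_sum hA mulrA mulfV ?mul1r; last by rewrite expf_neq0 // pnatr_eq0; lia.
rewrite hS hsplit hW !natrD.
have -> : forall a b c : R, a + b + c - b - a = c.
  by move=> a b c; ring.
rewrite ler0n /= -!natrM ler_nat.
have := @Dt_bound e n l; by rewrite -mulnA.
Qed.
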